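(* Let $f : \widehat{\mathbb{Z}} \to \widehat{\mathbb{Z}}$ be a continuous map, $P$ a period map of $f$, and let $k, m, n \in \mathbb{N}$ satisfy $m = P^k(n) = P^{k+1}(n)$. Let $K$ be the preperiod length and $L$ the period of the reduction $f_m : \mathbb{Z}/m\mathbb{Z} \to \mathbb{Z}/m\mathbb{Z}$. Then for all $s, t \in \widehat{\mathbb{Z}}$ and $u, v \in \mathbb{N}$, if $s \equiv_m t$, $u, v \ge k + K$ and $u \equiv_L v$, then $f^u(s) \equiv_n f^v(t)$.
   Context: $\mathbb{N} = \{1,2,\dots\}$, $\widehat{\mathbb{Z}} = \varprojlim_n \mathbb{Z}/n\mathbb{Z}$; for $s,t \in \widehat{\mathbb{Z}}$, $s \equiv_n t$ means $s - t \in n\widehat{\mathbb{Z}}$; $f^u$ and $P^k$ denote iterates. A map $P:\mathbb{N} \to \mathbb{N}$ is a period map of $f$ if $s \equiv_{P(n)} t$ implies $f(s) \equiv_n f(t)$ for all $s,t,n$; then $f$ induces reductions $f_n : \mathbb{Z}/P(n)\mathbb{Z} \to \mathbb{Z}/n\mathbb{Z}$, and since $P(m) = m$, $f_m$ is a self-map of $\mathbb{Z}/m\mathbb{Z}$. For a self-map $\sigma$ of a finite set $F$ and $y \in F$, the tail length $k_y$ and cycle length $l_y$ are the unique integers $k_y \ge 0$, $l_y \ge 1$ such that for $k' \ge 0, l' \ge 1$: $\sigma^{k'}(y) = \sigma^{k'+l'}(y)$ iff $k_y \le k'$ and $l_y \mid l'$. The preperiod length of $\sigma$ is $\max_y k_y$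 and the period of $\sigma$ is $\operatorname{lcm}_y l_y$. *)

(* Defs.v *)
From mathcomp Require Import all_boot.
Set Implicit Arguments. Unset Strict Implicit. Unset Printing Implicit Defensive.

(* Profinite integers Zhat = lim_n Z/nZ, represented as compatible families of
   residues: component n (for n >= 1) lies in [0, n); component 0 is fixed to 0
   (padding, so that nat index 0 carries no information). *)
Record zhat := ZHat {
  zc : nat -> nat;
  zc0 : zc 0 = 0;
  zc_lt : forall n, 0 < n -> zc n < n;
  zc_compat : forall d n, 0 < d -> 0 < n -> d %| n -> zc n %% d = zc d }.

(* s ==_n t : s - t \in n Zhat, i.e. s = t + n*w for some w in Zhat
   (ring operations of Zhat computed componentwise). *)
Definition zcong (n : nat) (s t : zhat) : Prop :=
  exists w : zhat, forall j, 0 < j -> zc s j = (zc t j + n * zc w j) %% j.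

(* continuity for the profinite topology (basic neighbourhoods s + m Zhat) *)
Definition zcontinuous (f : zhat -> zhat) : Prop :=
  forall (s : zhat) (n : nat), 0 < n ->
    exists2 m, 0 < m & forall t, zcong m s t -> zcong n (f s) (f t).

Definition period_map (f : zhat -> zhat) (P : nat -> nat) : Prop :=
  (forall n, 0 < n -> 0 < P n) /\
  (forall (s t : zhat) (n : nat), 0 < n -> zcong (P n) s t -> zcong n (f s) (f t)).

Definition zofnat_c (a : nat) (j : nat) : nat := if j is 0 then 0 else a %% j.

Lemma zofnat_c0 a : zofnat_c a 0 = 0. Proof. by []. Qed.
Lemma zofnat_lt a n : 0 < n -> zofnat_c a n < n.
Proof. by case: n => // n _; rewrite /zofnat_c ltn_pmod. Qed.
Lemma zofnat_compat a d n : 0 < d -> 0 < n -> d %| n ->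
  zofnat_c a n %% d = zofnat_c a d.
Proof. by case: d => // d; case: n => // n _ _ /= H; rewrite modn_dvdm. Qed.

Definition zofnat (a : nat) : zhat :=
  ZHat (zofnat_c0 a) (@zofnat_lt a) (@zofnat_compat a).

Lemma ord_pos m (x : 'I_m) : 0 < m.
Proof. exact: leq_ltn_trans (leq0n x) (ltn_ord x). Qed.

(* reduction f_m : Z/mZ -> Z/mZ (meaningful when P m = m):
   lift x to Zhat, apply f, reduce mod m *)
Definition red (f : zhat -> zhat) (m : nat) (x : 'I_m) : 'I_m :=
  Ordinal (zc_lt (f (zofnat x)) (ord_pos x)).

Definition tail_cycle (T : finType) (sigma : T -> T) (y : T) (k l : nat) : Prop :=
  0 < l /\
  forall k' l', 0 < l' ->
    (iter k' sigma y = iter (k' + l') sigma y <-> (k <= k' /\ l %| l')).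

(* Main.v *)
Require Import Defs.
From mathcomp Require Import all_boot zify.

Lemma pm j d : 0 < j -> 0 < d -> 0 < j * d.
Proof. by rewrite muln_gt0 => -> ->. Qed.

Section W.
Variables (m : nat) (a b : zhat).
Hypothesis m0 : 0 < m.
Hypothesis eab : zc a m = zc b m.

Definition wc (j : nat) : nat :=
  if j is 0 then 0 else (zc a (j*m) %/ m + j - zc b (j*m) %/ m) %% j.

Lemma wc0 : wc 0 = 0. Proof. by []. Qed.
Lemma wc_lt j : 0 < j -> wc j < j.
Proof. by case: j => // j _; rewrite /wc ltn_pmod. Qed.

Lemma qcompat (c : zhat) d j : 0 < d -> 0 < j -> d %| j ->
  (zc c (j*m) %/ m) %% d = zc c (d*m) %/ m.
Proof.
move=> d0 j0 dj; rewrite modn_divl zc_compat //; try exact: pm.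
by rewrite dvdn_pmul2r.
Qed.

Lemma qlt (c : zhat) j : 0 < j -> zc c (j*m) %/ m < j.
Proof. move=> j0; rewrite ltn_divLR //; apply: zc_lt; exact: pm. Qed.

Lemma wc_compat d j : 0 < d -> 0 < j -> d %| j -> wc j %% d = wc d.
Proof.
case: d => // d; case: j => // j _ _ dj.
rewrite /wc modn_dvdm //.
set Aj := zc a (j.+1*m) %/ m. set Bj := zc b (j.+1*m) %/ m.
set Ad := zc a (d.+1*m) %/ m. set Bd := zc b (d.+1*m) %/ m.
have hA : Aj %% d.+1 = Ad by apply: qcompat.
have hB : Bj %% d.+1 = Bd by apply: qcompat.
have lB : Bj < j.+1 by apply: qlt.
have lBd : Bd < d.+1 by apply: qlt.
have e1 : (Aj + j.+1 - Bj + Bj) %% d.+1 = Ad %% d.+1.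
  have -> : Aj + j.+1 - Bj + Bj = Aj + j.+1 by rewrite subnK // ltnW // ltn_addl.
  by rewrite -modnDm hA (eqP dj) addn0.
have e2 : (Ad + d.+1 - Bd + Bj) %% d.+1 = Ad %% d.+1.
  rewrite -modnDmr hB.
  have -> : Ad + d.+1 - Bd + Bd = Ad + d.+1 by rewrite subnK // ltnW // ltn_addl.
  by rewrite -modnDmr modnn addn0.
by apply/eqP; rewrite -(eqn_modDr Bj); apply/eqP; rewrite e1 e2.
Qed.

Definition wz : zhat := ZHat wc0 wc_lt wc_compat.

Lemma zcong_of_eq : zcong m a b.
Proof.
exists wz => j j0; rewrite /= /wc; case: j j0 => // j _.
set x := zc a (j.+1*m); set y := zc b (j.+1*m).
have hx : x %% m = zc a m by apply: zc_compat => //; [exact: pm | apply: dvdn_mull].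
have hy : y %% m = zc b m by apply: zc_compat => //; [exact: pm | apply: dvdn_mull].
have ha : zc a j.+1 = x %% j.+1 by rewrite zc_compat //; [exact: pm | apply: dvdn_mulr].
have hb : zc b j.+1 = y %% j.+1 by rewrite zc_compat //; [exact: pm | apply: dvdn_mulr].
have lB : y %/ m < j.+1 by apply: qlt.
rewrite ha hb modnDml -modnDmr modnMmr modnDmr; symmetry.
have ex := divn_eq x m; have ey := divn_eq y m.
rewrite hx in ex; rewrite hy -eab in ey.
have -> : y + m * (x %/ m + j.+1 - y %/ m) = m * j.+1 + x.
  move: ex ey lB; set X := x %/ m; set Y := y %/ m; set r := zc a m.
  move=> ex ey lB; rewrite ex ey mulnBr mulnDr (mulnC X) (mulnC Y).
  have : m * Y <= m * j.+1 by rewrite leq_mul2l ltnW ?orbT.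
  lia.
by rewrite (modnMDl m x j.+1).
Qed.
End W.

Lemma zcong_eq m a b : 0 < m -> zcong m a b -> zc a m = zc b m.
Proof.
move=> m0 [w /(_ m m0) ->].
by rewrite -modnDmr modnMr addn0 modn_small // zc_lt.
Qed.

Lemma iter_cong (f : zhat -> zhat) P : period_map f P ->
  forall j n a b, 0 < n -> zcong (iter j P n) a b ->
  zcong n (iter j f a) (iter j f b).
Proof.
move=> [Ppos Pf]; elim=> [|j IH] n a b n0 //.
rewrite iterSr => H; rewrite !iterS; apply: Pf => //.
by apply: IH => //; apply: Ppos.
Qed.

Lemma zofnat_m x m : 0 < m -> x < m -> zc (zofnat x) m = x.
Proof. by case: m => // m _ /= H; rewrite modn_small. Qed.

Lemma red_iter (f : zhat -> zhat) P m (m0 : 0 < m) : period_map f P -> P m = m ->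
  forall j a, zc (iter j f a) m = val (iter j (red f (m:=m)) (Ordinal (zc_lt a m0))).
Proof.
move=> [Ppos Pf] Pm; elim=> [|j IH] a //=.
have e : iter j (red f (m:=m)) (Ordinal (zc_lt a m0)) = Ordinal (zc_lt (iter j f a) m0).
  by apply: val_inj; rewrite /= IH.
rewrite e /=; apply: zcong_eq => //; apply: Pf => //; rewrite Pm.
apply: zcong_of_eq => //; symmetry; exact: (@zofnat_m (zc (iter j f a) m) m m0 (zc_lt _ m0)).
Qed.

Lemma cyc_lemma (T : finType) (g : T -> T) y (kk ll : nat) K L :
  tail_cycle g y kk ll -> kk <= K -> ll %| L ->
  forall p q, K <= p -> K <= q -> p = q %[mod L] -> iter p g y = iter q g y.
Proof.
move=> [_ tc] kK lL.
have H : forall p q, K <= p -> p <= q -> p = q %[mod L] -> iter p g y = iter q g y.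
  move=> p q Kp pq pqL.
  have -> : q = p + (q - p) by rewrite subnKC.
  case e: (q - p) => [|d]; first by rewrite addn0.
  apply/(tc p d.+1) => //; split; first exact: leq_trans kK Kp.
  apply: dvdn_trans lL _; rewrite -e -eqn_mod_dvd //; exact/eqP.
move=> p q Kp Kq pq; case: (leqP p q) => hpq; first exact: H.
by symmetry; apply: H => //; apply: ltnW.
Qed.

Theorem lemma3p6 (f : zhat -> zhat) (P : nat -> nat) (k m n : nat)
  (kk ll : 'I_m -> nat) (K L : nat) :
  zcontinuous f ->
  period_map f P ->
  0 < k -> 0 < m -> 0 < n ->
  m = iter k P n -> m = iter k.+1 P n ->
  (forall y : 'I_m, tail_cycle (red f (m:=m)) y (kk y) (ll y)) ->
  K = \max_(y : 'I_m) kk y ->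
  L = \big[lcmn/1]_(y : 'I_m) ll y ->
  forall (s t : zhat) (u v : nat),
    0 < u -> 0 < v ->
    zcong m s t -> k + K <= u -> k + K <= v -> u = v %[mod L] ->
    zcong n (iter u f s) (iter v f t).
Proof.
move=> _ PM k0 m0 n0 Em Em1 TC EK EL s t u v _ _ st ku kv uv.
have Pm : P m = m by rewrite {2}Em1 iterS -Em.
have ue : u = k + (u - k) by rewrite subnKC // (leq_trans (leq_addr K k)).
have ve : v = k + (v - k) by rewrite subnKC // (leq_trans (leq_addr K k)).
rewrite ue ve !iterD; apply: (@iter_cong f P PM) => //; rewrite -Em.
apply: zcong_of_eq => //.
rewrite !(@red_iter f P m m0 PM Pm).
have -> : Ordinal (zc_lt t m0) = Ordinal (zc_lt s m0).
  by apply: val_inj; rewrite /= (@zcong_eq m s t m0 st).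
set y := Ordinal (zc_lt s m0).
congr val; apply: (@cyc_lemma _ _ y _ _ K L (TC y)).
- by rewrite EK; apply: leq_bigmax.
- by rewrite EL; apply: (biglcmn_sup y).
- by rewrite leq_subRL // (leq_trans (leq_addr K k)).
- by rewrite leq_subRL // (leq_trans (leq_addr K k)).
- by apply/eqP; rewrite -(eqn_modDl k) -ue -ve; apply/eqP.
Qed.
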